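(* Let $(X,\|\cdot\|)$ be a normed linear space over $\mathbb{R}$ or $\mathbb{C}$. Then for all $x,a\in X$, $$\langle x,a\rangle_i\ \ge\ \tfrac12\left(\|a\|^2-\|x-a\|^2\right).$$ Moreover, if $X\neq\{0\}$, the constant $\tfrac12$ cannot be replaced by a larger quantity on the set of pairs with $\|a\|>\|x-a\|$: there is no constant $C>\tfrac12$ such that $\langle x,a\rangle_i\ge C\left(\|a\|^2-\|x-a\|^2\right)$ for all $x,a\in X$ with $\|a\|>\|x-a\|$.
   Context: For a normed linear space $(X,\|\cdot\|)$, the inferior semi-inner product is defined for $x,y\in X$ by $\langle x,y\rangle_i:=\lim_{t\to 0^-}\frac{\|y+tx\|^2-\|y\|^2}{2t}$ (the limit exists by convexity of $t\mapsto\frac12\|y+tx\|^2$). *)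

(* Defs.v *)
From HB Require Import structures.
From mathcomp Require Import all_boot all_order all_algebra.
From mathcomp Require Import all_classical all_reals all_analysis.
Set Implicit Arguments. Unset Strict Implicit. Unset Printing Implicit Defensive.
Import Order.TTheory GRing.Theory Num.Theory.
Import numFieldNormedType.Exports.
Local Open Scope classical_set_scope.
Local Open Scope ring_scope.

Definition semi_inner_i {R : realType} {V : normedModType R} (x y : V) : R :=
  lim ((fun t : R => (`|y + t *: x| ^+ 2 - `|y| ^+ 2) / (2 * t)) @ 0^'-).

(* Main.v *)
Require Import Defs.
From HB Require Import structures.
From mathcomp Require Import all_boot all_order all_algebra.
From mathcomp Require Import all_classical all_reals all_analysis.
From mathcomp Require Import ring lra.
Import Order.TTheory GRing.Theory Num.Theory.
Import numFieldNormedType.Exports.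
Local Open Scope ring_scope.

Section Aux.
Context {R : realType} {V : normedModType R}.

Definition qf (x a : V) (t : R) : R :=
  (`|a + t *: x| ^+ 2 - `|a| ^+ 2) / (2 * t).

Lemma qf_mono (x a : V) (s t : R) : s < 0 -> t < 0 -> s <= t -> qf x a s <= qf x a t.
Proof.
move=> s0 t0 st; rewrite /qf.
set Ns := `|a + s *: x|; set Nt := `|a + t *: x|; set N0 := `|a|.
have e : (-s) *: (a + t *: x) = (-t) *: (a + s *: x) + (t - s) *: a.
  rewrite !scalerDr !scalerA scalerBl !scaleNr !mulNr (mulrC t s).
  by rewrite addrAC addrA addNr add0r addrC.
have tri : (-s) * Nt <= (-t) * Ns + (t - s) * N0.
  have := ler_normD ((-t) *: (a + s *: x)) ((t - s) *: a).
  rewrite -e !normrZ !ger0_norm. all: try lra. exact: id.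
have Ns0 : 0 <= Ns by rewrite normr_ge0.
have Nt0 : 0 <= Nt by rewrite normr_ge0.
have N00 : 0 <= N0 by rewrite normr_ge0.
rewrite ler_ndivrMr; last lra.
rewrite mulrAC ler_ndivrMr; last lra.
have h1 : ((-s) * Nt) ^+ 2 <= ((-t) * Ns + (t - s) * N0) ^+ 2.
  by rewrite ler_sqr ?nnegrE; [|nra|nra].
have h2 : ((-t) * Ns + (t - s) * N0) ^+ 2 <= (-s) * ((-t) * Ns ^+ 2 + (t - s) * N0 ^+ 2).
  have : 0 <= (-t) * (t - s) * (Ns - N0) ^+ 2 by rewrite mulr_ge0 ?sqr_ge0 //; nra.
  nra.
nra.
Qed.

Lemma qf_ub (x a : V) (t : R) : -1 < t -> t < 0 ->
  qf x a t <= `|x| * (2 * `|a| + `|x|) / 2.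
Proof.
move=> t1 t0; rewrite /qf.
set Nt := `|a + t *: x|; set N0 := `|a|; set X := `|x|.
have h1 : N0 <= Nt + (-t) * X.
  have := ler_normD (a + t *: x) ((-t) *: x).
  rewrite normrZ ger0_norm; last lra.
  by rewrite scaleNr addrK.
have h2 : Nt <= N0 + (-t) * X.
  have := ler_normD a (t *: x).
  by rewrite normrZ ler0_norm; last lra.
have Nt0 : 0 <= Nt by rewrite normr_ge0.
have N00 : 0 <= N0 by rewrite normr_ge0.
have X0 : 0 <= X by rewrite normr_ge0.
rewrite ler_ndivrMr; last lra.
have h3 : (N0 - Nt) * (N0 + Nt) <= (-t) * X * (N0 + Nt) by nra.
have h5 : Nt <= N0 + X by nra.
have h4 : (-t) * X * (N0 + Nt) <= (-t) * X * (2 * N0 + X).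
  by apply: ler_wpM2l; [apply: mulr_ge0; lra|lra].
nra.
Qed.

Lemma qf_cvg (x a : V) : cvg (qf x a @ 0^'-)%classic.
Proof.
apply: nondecreasing_at_left_is_cvgr.
- apply: nearW => y u v; rewrite !in_itv /= => /andP[_ u0] /andP[_ v0] uv.
  exact: qf_mono.
- near=> y; exists (`|x| * (2 * `|a| + `|x|) / 2) => _ [z hz <-].
  move: hz; rewrite /= in_itv /= => /andP[yz z0]; apply: qf_ub => //.
  apply: lt_trans yz; near: y; apply: nbhs_left_gt; lra.
Unshelve. all: by end_near. Qed.

End Aux.

Theorem lemma2p1 (R : realType) (V : normedModType R) :
  (forall x a : V, semi_inner_i x a >= 2^-1 * (`|a| ^+ 2 - `|x - a| ^+ 2))
  /\ ((exists v : V, v != 0) ->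
      ~ (exists C : R, 2^-1 < C /\
           forall x a : V, `|x - a| < `|a| ->
             semi_inner_i x a >= C * (`|a| ^+ 2 - `|x - a| ^+ 2))).
Proof.
split.
- move=> x a; rewrite /semi_inner_i.
  have -> : 2^-1 * (`|a| ^+ 2 - `|x - a| ^+ 2) = qf x a (-1).
    by rewrite /qf scaleN1r distrC; field.
  idtac.
  apply: limr_ge; first exact: qf_cvg.
  near=> t; apply: qf_mono; first lra.
  + by near: t; exact: nbhs_left_lt.
  + by apply: ltW; near: t; apply: nbhs_left_gt; lra.
- move=> [v v0] [C [C2 HC]].
  set k := (2 * C)^-1.
  have Ck : C * k = 2^-1 by rewrite /k invfM mulrCA mulfV ?mulr1; [|lra].
  have k0 : 0 < k by rewrite /k invr_gt0; lra.
  have k1 : k < 1 by rewrite /k invf_lt1; lra.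
  set N := `|v|.
  have N0 : 0 < N by rewrite /N normr_gt0.
  have ex : `|(1 - k) *: v - v| = k * N.
    rewrite scalerBl scale1r addrAC subrr add0r normrN normrZ ger0_norm; [by []|lra].
  have := HC ((1 - k) *: v) v; rewrite ex -/N => /(_ ltac:(nra)).
  have : semi_inner_i ((1 - k) *: v) v <= (1 - k) * N ^+ 2.
    rewrite /semi_inner_i; apply: limr_le; first exact: qf_cvg.
    near=> t.
    have t0 : t < 0 by near: t; exact: nbhs_left_lt.
    have t1 : -1 < t by near: t; apply: nbhs_left_gt; lra.
    rewrite /qf scalerA -{1}(scale1r v) -scalerDl normrZ ger0_norm; last nra.
    rewrite ler_ndivrMr; last lra.
    rewrite -/N exprMn -subr_ge0.
    rewrite (_ : _ - _ = (t * (1 - k) * N) ^+ 2); [exact: sqr_ge0|ring].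
  have key : (1 - k) * N ^+ 2 < C * (N ^+ 2 - (k * N) ^+ 2).
    rewrite -(ltr_pM2l k0); rewrite [X in _ < X]mulrA (mulrC k C) Ck.
    have : 0 < (1 - k) ^+ 2 * N ^+ 2 by apply: mulr_gt0; apply: exprn_gt0; lra.
    nra.
  move=> A B; have := le_trans B A; rewrite leNgt key //.
Unshelve. all: by end_near. Qed.
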